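(* Let $c$ be a positive integer and let $\nu$ be the smallest positive integer that does not divide $c$. There is a constant $C$ depending only on $c$ such that for every integer $n>c$: (1) $\left|\mathrm{mup}(n,c)-\frac{n}{\nu}\right|\le C$; and (2) in every unique partition of $n$ and $c$ with exactly $\mathrm{mup}(n,c)$ parts, all but at most $C$ of the parts are equal to $\nu$.
   Context: A unique partition of positive integers $A$ and $B$ consists of positive integers $A_1,\dots,A_a$ with $\sum_i A_i=A$ and $B_1,\dots,B_b$ with $\sum_j B_j=B$ such that, viewing these as $a+b$ indexed items, the only subsets of the items whose sum equals $A$ are the set of items $\{A_1,\dots,A_a\}$ and, in case $A=B$, also its complement. Its parts are the $a+b$ numbers $A_i,B_j$. $\mathrm{mup}(A,B)$ is the maximum of $a+b$ over all unique partitions of $A$ and $B$ (with $\mathrm{mup}(1,1)=2$). *)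

(* Defs.v *)
From mathcomp Require Import all_boot all_order all_algebra.
From Stdlib Require Import ClassicalEpsilon.
Set Implicit Arguments. Unset Strict Implicit. Unset Printing Implicit Defensive.

(* A unique partition of A and B: parts sA (summing to A) and sB (summing to B),
   all positive, viewed as size sA + size sB indexed items (the items of sA first,
   then those of sB); the only index subsets whose parts sum to A are the index
   set of sA and, when A = B, its complement. *)
Definition unique_partition (A B : nat) (sA sB : seq nat) : Prop :=
  all (fun x => 0 < x) (sA ++ sB) /\ sumn sA = A /\ sumn sB = B /\
  forall S : {set 'I_(size sA + size sB)},
    \sum_(i in S) nth 0 (sA ++ sB) i = A ->
    S = [set i : 'I_(size sA + size sB) | i < size sA]
    \/ (A = B /\ S = [set i : 'I_(size sA + size sB) | size sA <= i]).

Definition has_up (A B k : nat) : Prop :=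
  exists sA sB, unique_partition A B sA sB /\ size sA + size sB = k.

(* mupart A B (the paper's mup; renamed to avoid clash with polydiv.mup) = max number of parts of a unique partition of A and B.
   Since all parts are positive, the number of parts is at most A + B. *)
Definition mupart (A B : nat) : nat :=
  \max_(k < (A + B).+1)
     (if excluded_middle_informative (has_up A B k) then (k : nat) else 0).

(* Main.v *)
Require Import Defs.
From mathcomp Require Import all_boot all_order all_algebra.
Import Order.TTheory GRing.Theory Num.Theory.
From mathcomp Require Import zify lra.
From Stdlib Require Import ClassicalEpsilon.

Lemma sum_nth (s : seq nat) : \sum_(i < size s) nth 0 s i = sumn s.
Proof. by rewrite sumnE (big_nth 0) big_mkord. Qed.

Lemma cnt_nth (p : pred nat) (s : seq nat) :
  \sum_(i < size s) (if p (nth 0 s i) then 1 else 0) = count p s.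
Proof.
elim: s => [|x s IH]; first by rewrite big_ord0.
by rewrite /= big_ord_recl /= IH; case: (p x).
Qed.

Lemma card_cnt (sA sB : seq nat) (p : pred nat) :
  #|[set i : 'I_(size sA + size sB) | (i < size sA) && p (nth 0 (sA ++ sB) i)]|
  = count p sA.
Proof.
rewrite -sum1_card big_mkcond big_split_ord /=.
rewrite [X in _ + X]big1 ?addn0; last first.
  by move=> i _; rewrite inE /= ltnNge leq_addr.
rewrite -cnt_nth; apply: eq_bigr => i _.
by rewrite inE /= ltn_ord /= nth_cat ltn_ord.
Qed.

Lemma key (n c : nat) sA sB (hnc : n != c) (hc : 0 < c) :
  unique_partition n c sA sB ->
  forall T : {set 'I_(size sA + size sB)}, (forall i, i \in T -> i < size sA) ->
  \sum_(i in T) nth 0 (sA ++ sB) i != c.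
Proof.
move=> [_ [hA [hB hU]]] T hT; apply/eqP => hs.
have tot : \sum_(i < size sA + size sB) nth 0 (sA ++ sB) i = n + c.
  by rewrite -size_cat sum_nth sumn_cat hA hB.
rewrite (bigID (mem T)) /= hs in tot.
have hC : \sum_(i in ~: T) nth 0 (sA ++ sB) i = n.
  move: tot; rewrite addnC => /eqP; rewrite eqn_add2r => /eqP <-.
  by apply: eq_bigl => i; rewrite inE.
have sB0 : 0 < size sB.
  rewrite lt0n size_eq0; apply/eqP => E; move: hB hc; rewrite E /= => <-; by [].
have lt : size sA < size sA + size sB by rewrite -{1}(addn0 (size sA)) ltn_add2l.
case: (hU _ hC) => [E|[E _]]; last by rewrite E eqxx in hnc.
have : Ordinal lt \in ~: T.
  by rewrite inE; apply/negP => /hT /=; rewrite ltnn.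
by rewrite E inE /= ltnn.
Qed.

Lemma cnt_small (n c k : nat) sA sB (hnc : n != c) (hc : 0 < c) (hk : k %| c) :
  unique_partition n c sA sB -> count (pred1 k) sA < c %/ k.
Proof.
move=> hU; rewrite ltnNge; apply/negP => hj.
set K := [set i : 'I_(size sA + size sB) | (i < size sA) && pred1 k (nth 0 (sA ++ sB) i)].
have cK : #|K| = count (pred1 k) sA by rewrite card_cnt.
set T := [set x in take (c %/ k) (enum K)].
have cT : #|T| = c %/ k.
  rewrite cardsE; move/card_uniqP: (take_uniq (c %/ k) (enum_uniq (mem K))) => ->.
  by rewrite size_takel // -cardE cK.
have TK : forall x, x \in T -> x \in K.
  by move=> x; rewrite inE => /mem_take; rewrite mem_enum.
have := @key _ _ _ _ hnc hc hU T.
have -> : \sum_(i in T) nth 0 (sA ++ sB) i = \sum_(i in T) k.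
  by apply: eq_bigr => i /TK; rewrite inE => /andP [_ /eqP].
rewrite sum_nat_const cT divnK // eqxx => H; suff: false by []; apply: H.
by move=> i /TK; rewrite inE => /andP [].
Qed.

Lemma constr_up (n c : nat) sA (hnc : n != c) (hc : 0 < c) :
  all (fun x => 0 < x) sA -> sumn sA = n ->
  (forall T : {set 'I_(size sA + size [:: c])}, (forall i, i \in T -> i < size sA) ->
     \sum_(i in T) nth 0 (sA ++ [:: c]) i != c) ->
  unique_partition n c sA [:: c].
Proof.
move=> hpos hA hT.
have hall : all (fun x => 0 < x) (sA ++ [:: c]) by rewrite all_cat hpos /= hc.
split=> //; split=> //; split; first by rewrite /= addn0.
move=> S hS; left.
set f := fun i : 'I_(size sA + size [:: c]) => nth 0 (sA ++ [:: c]) i.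
have tot : \sum_(i < size sA + size [:: c]) f i = n + c.
  by rewrite /f -size_cat sum_nth sumn_cat hA /= addn0.
rewrite (bigID (mem S)) /= in tot.
have hC : \sum_(i in ~: S) f i = c.
  have -> : \sum_(i in ~: S) f i = \sum_(i | i \notin S) f i.
    by apply: eq_bigl => i; rewrite inE.
  by move: tot; rewrite hS => /eqP; rewrite eqn_add2l => /eqP.
have lt : size sA < size sA + size [:: c] by rewrite /= addn1.
set last := Ordinal lt.
have flast : f last = c by rewrite /f /= nth_cat ltnn subnn.
have fpos : forall i, 0 < f i.
  by move=> i; rewrite /f; apply: (all_nthP 0 hall); rewrite size_cat ltn_ord.
have lastS : last \in ~: S.
  rewrite inE; apply/negP => lS.
  have H1 : forall i, i \in ~: S -> i < size sA.
    move=> i; rewrite inE => iS.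
    have : i != last by apply: contraNneq iS => ->; exact lS.
    have Hi : nat_of_ord i < size sA + size [:: c] := ltn_ord i.
  have s1 : size [:: c] = 1 by [].
    move=> ne'; have : nat_of_ord i != size sA by apply: contra ne' => /eqP E; apply/eqP; apply: val_inj.
  lia.
  by move: (hT _ H1); rewrite -/f hC eqxx.
move: hC; rewrite (bigD1 last) //= flast => /eqP; rewrite -{2}(addn0 c) eqn_add2l sum_nat_eq0 => /forallP H.
apply/setP => i; rewrite inE.
case: (eqVneq i last) => [->|ne].
  by move: lastS; rewrite inE ltnn => /negbTE.
have il : i < size sA.
  have Hi : nat_of_ord i < size sA + size [:: c] := ltn_ord i.
  have s1 : size [:: c] = 1 by [].
  move: ne; move=> ne'; have : nat_of_ord i != size sA by apply: contra ne' => /eqP E; apply/eqP; apply: val_inj.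
  lia.
rewrite il; apply/negPn/negP => iS.
have := H i; rewrite inE iS ne /= => /eqP f0.
by have := fpos i; rewrite f0.
Qed.

Lemma constr_T (c r q nu : nat) (hr : c < r) (hnu : ~~ (nu %| c)) :
  forall T : {set 'I_(size (r :: nseq q nu) + size [:: c])},
  (forall i, i \in T -> i < size (r :: nseq q nu)) ->
  \sum_(i in T) nth 0 ((r :: nseq q nu) ++ [:: c]) i != c.
Proof.
move=> T hT; apply/eqP => hs.
have z0 : 0 < size (r :: nseq q nu) + size [:: c] by [].
set z := Ordinal z0.
case: (boolP (z \in T)) => zT.
  move: hs; rewrite (bigD1 z) //= => E.
  by move: hr; rewrite -E ltnNge leq_addr.
have : \sum_(i in T) nth 0 ((r :: nseq q nu) ++ [:: c]) i = \sum_(i in T) nu.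
  apply: eq_bigr => i iT.
  have il := hT i iT.
  have ne : nat_of_ord i != 0.
    apply: contraNneq zT => E; suff <- : i = z by []; exact: val_inj.
  rewrite nth_cat il.
  move: il ne; case: (nat_of_ord i) => [|j] //= jl _.
  by move: jl; rewrite ltnS size_nseq nth_nseq => ->.
  rewrite hs sum_nat_const => E.
by move: hnu; rewrite E dvdn_mull.
Qed.

Lemma cnt_lt_succ (m : nat) (s : seq nat) :
  count (fun x => x < m.+1) s = count (fun x => x < m) s + count (pred1 m) s.
Proof.
elim: s => //= x s ->; rewrite ltnS leq_eqVlt.
by case: (ltngtP x m) => /= _; lia.
Qed.

Lemma small_cnt (m c : nat) (s : seq nat) :
  (forall k, k < m -> count (pred1 k) s <= c) -> count (fun x => x < m) s <= m * c.
Proof.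
elim: m => [|m IH] H; first by rewrite count_pred0.
rewrite cnt_lt_succ mulSn addnC leq_add // ?H //.
by apply: IH => k km; apply: H; rewrite ltnS ltnW.
Qed.

Lemma decomp_size (nu : nat) (s : seq nat) :
  size s = count (fun x => x < nu) s + count (fun x => x == nu) s + count (fun x => nu < x) s.
Proof.
elim: s => //= x s ->.
by case: (ltngtP x nu) => /= H; lia.
Qed.

Lemma decomp_sum (nu : nat) (s : seq nat) :
  nu * count (fun x => x == nu) s + nu.+1 * count (fun x => nu < x) s <= sumn s.
Proof.
elim: s => [|x s IH] /=; first by rewrite !muln0.
case: (ltngtP x nu) => /= H; rewrite ?add0n ?add1n ?mulnS.
- exact: leq_trans IH (leq_addl _ _).
- by rewrite addnCA leq_add.
- by rewrite -addnA H leq_add2l.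
Qed.

Lemma decomp_ne (nu : nat) (s : seq nat) :
  count (fun x => x != nu) s = count (fun x => x < nu) s + count (fun x => nu < x) s.
Proof.
elim: s => //= x s ->.
case: (ltngtP x nu) => /= H; lia.
Qed.

Lemma size_le_sumn (s : seq nat) : all (fun x => 0 < x) s -> size s <= sumn s.
Proof. by elim: s => //= x s IH /andP [hx /IH]; lia. Qed.

Lemma cnt0 (s : seq nat) : all (fun x => 0 < x) s -> count (pred1 0) s = 0.
Proof. by elim: s => //= x s IH /andP [hx /IH ->]; case: x hx. Qed.

Lemma mup_ge (A B k : nat) : has_up A B k -> k <= mupart A B.
Proof.
move=> h.
have kle : k < (A + B).+1.
  case: h => sA [sB [[hp [hA [hB _]]] <-]].
  rewrite ltnS -hA -hB -size_cat -sumn_cat; exact: size_le_sumn.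
rewrite /mupart.
have := leq_bigmax (F := fun i : 'I_(A + B).+1 =>
  if excluded_middle_informative (has_up A B i) then (i : nat) else 0) (Ordinal kle).
by case: excluded_middle_informative.
Qed.

Lemma mup_le (A B M : nat) :
  (forall sA sB, unique_partition A B sA sB -> size sA + size sB <= M) ->
  mupart A B <= M.
Proof.
move=> H; rewrite /mupart; apply/bigmax_leqP => i _.
case: excluded_middle_informative => [h|_] //=.
case: h => sA [sB [hU E]]; rewrite -E; exact: H.
Qed.
Lemma ratbound (nu n M D c C : nat) : 0 < nu -> nu * M <= n + nu * D -> n <= nu * M + c ->
  D <= C -> c <= C ->
  (`| ((M%:R : rat) - ((n%:R : rat) / (nu%:R : rat))) | <= (C%:R : rat))%R.
Proof.
move=> h0 h1 h2 h3 h4.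
have r0 : (1 <= (nu%:R : rat))%R by rewrite ler1n.
have r1 : ((nu%:R : rat) * M%:R <= n%:R + nu%:R * D%:R)%R by rewrite -!natrM -natrD ler_nat.
have r2 : ((n%:R : rat) <= nu%:R * M%:R + c%:R)%R by rewrite -!natrM -natrD ler_nat.
have r3 : ((D%:R : rat) <= C%:R)%R by rewrite ler_nat.
have r4 : ((c%:R : rat) <= C%:R)%R by rewrite ler_nat.
have r5 : (0 <= (c%:R : rat))%R by [].
have r6 : (0 <= (D%:R : rat))%R by [].
have ey : ((n%:R : rat) / nu%:R * nu%:R = n%:R)%R.
  by rewrite mulfVK // pnatr_eq0 -lt0n.
move: ey r1 r2; set y := ((n%:R : rat) / nu%:R)%R => ey r1 r2.
rewrite -ey in r1 r2.
rewrite ler_norml; apply/andP; split; nra.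
Qed.

Theorem proposition3p2 (c : nat) (hc : (0 < c)%N)
  (nu : nat) (hnu0 : (0 < nu)%N) (hnu : ~~ (nu %| c)%N)
  (hmin : forall k : nat, (0 < k < nu)%N -> (k %| c)%N) :
  exists C : nat, forall n : nat, (c < n)%N ->
    (`| ((mupart n c)%:R : rat) - ((n%:R : rat) / (nu%:R : rat)) | <= (C%:R : rat))%R /\
    (forall sA sB : seq nat, unique_partition n c sA sB ->
       size sA + size sB = mupart n c ->
       (count (fun x => x != nu) (sA ++ sB) <= C)%N).
Proof.
exists (nu * nu * c + 3 * nu * c + 3 * c) => n hn.
have hnc : n != c by rewrite gtn_eqF.
have small : forall sA sB, unique_partition n c sA sB ->
    count (fun x => x < nu) sA <= nu * c.
  move=> sA sB hU; apply: small_cnt => k kl.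
  case: k kl => [|k] kl.
    by rewrite cnt0 //; case: hU => hp _; move: hp; rewrite all_cat => /andP [].
  have hk : k.+1 %| c by apply: hmin; rewrite kl.
  have := @cnt_small _ _ _ _ _ hnc hc hk hU.
  by move/ltnW/leq_trans; apply; apply: leq_div.
have szB : forall sA sB, unique_partition n c sA sB -> size sB <= c.
  move=> sA sB [hp [_ [hB _]]]; rewrite -hB; apply: size_le_sumn.
  by move: hp; rewrite all_cat => /andP [].
have upb : forall sA sB, unique_partition n c sA sB ->
    nu * (size sA + size sB) <= n + nu * (nu * c + c).
  move=> sA sB hU.
  have h1 := small _ _ hU. have h2 := szB _ _ hU.
  have h3 := decomp_size nu sA. have h4 := decomp_sum nu sA.
  case: hU => _ [hA _]; rewrite hA in h4.
  rewrite h3; nia.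
have lowb : n <= nu * mupart n c + c.
  set q := (n - c.+1) %/ nu; set r := c.+1 + (n - c.+1) %% nu.
  have hq : n - c.+1 = q * nu + (n - c.+1) %% nu by rewrite /q -divn_eq.
  have hrm : (n - c.+1) %% nu < nu by rewrite ltn_pmod.
  have hup : has_up n c (q.+2).
    exists (r :: nseq q nu), [:: c]; split; last by rewrite /= size_nseq addn1.
    apply: constr_up => //.
    - by rewrite /= all_nseq hnu0 orbT /=; lia.
    - rewrite /= sumn_nseq /r; lia.
    - by apply: constr_T => //; rewrite /r; lia.
  have := @mup_ge _ _ _ hup; nia.
split.
  apply: (@ratbound nu n _ (nu * c + c) c) => //; try lia.
  have : mupart n c <= (n + nu * (nu * c + c)) %/ nu.
    apply: mup_le => sA sB hU; rewrite leq_divRL // mulnC; exact: upb _ _ hU.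
  rewrite leq_divRL // mulnC; lia.
move=> sA sB hU hsz.
have h1 := small _ _ hU. have h2 := szB _ _ hU.
have h3 := decomp_size nu sA. have h4 := decomp_sum nu sA.
have h5 := decomp_ne nu sA.
have h6 : count (fun x => x != nu) sB <= c := leq_trans (count_size _ _) h2.
rewrite count_cat h5.
move: lowb; rewrite -hsz h3.
case: hU => _ [hA _]; rewrite hA in h4.
nia.
Qed.
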